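(* Let $G$ be a finitely generated discrete group and let $K$ be a finite subset of $G$. Let $I$ be the two-sided ideal of the group ring $\mathbb{C}G$ generated by $\chi_K$. Then $K$ is an $\mathcal{F}(G)$-Pompeiu set if and only if $I=\mathbb{C}G$.
   Context: Complex-valued functions on $G$ are written as formal sums $f=\sum_{g\in G}a_g g$ with $f(g)=a_g$. $\mathcal{F}(G)$ denotes the set of all complex-valued functions on $G$, and $\mathbb{C}G$ the finitely supported ones, which form a ring under pointwise addition and convolution $f\ast h=\sum_{g\in G}\big(\sum_{x\in G}f(gx^{-1})h(x)\big)g$. For $S\subseteq G$, $\chi_S$ is the characteristic function of $S$. For a class $\mathcal{C}$ of complex-valued functions on $G$ containing $0$, a finite subset $K\subseteq G$ is a $\mathcal{C}$-Pompeiu set if $f=0$ is the only $f\in\mathcal{C}$ satisfying $\sum_{x\in gKh}f(x)=0$ for all $g,h\in G$. *)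

(* Defs.v *)
From HB Require Import structures.
From mathcomp Require Import all_boot all_order all_algebra.
From mathcomp Require Import all_classical.
From mathcomp Require Import reals Rstruct.
From mathcomp Require Import complex.
Set Implicit Arguments. Unset Strict Implicit. Unset Printing Implicit Defensive.
Import Order.TTheory GRing.Theory Num.Theory.
Local Open Scope classical_set_scope.
Local Open Scope ring_scope.

Definition CC : Type := (Rdefinitions.R)[i].
HB.instance Definition _ := GRing.ClosedField.on CC.

Section GroupRing.
Variable G : groupType.

Inductive gen_by (S : seq G) : G -> Prop :=
| gen_one : gen_by S 1%g
| gen_mul s g : s \in S -> gen_by S g -> gen_by S (s * g)%g
| gen_mulV s g : s \in S -> gen_by S g -> gen_by S (s^-1 * g)%g.

Definition finitely_generated : Prop := exists S : seq G, forall g, gen_by S g.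

(* F(G) : all complex-valued functions; CG : the finitely supported ones *)
Definition calF : set (G -> CC) := setT.
Definition fin_supp (f : G -> CC) : Prop := finite_set [set g | f g != 0].
Definition CG : set (G -> CC) := [set f | fin_supp f].

Definition conv (f h : G -> CC) : G -> CC :=
  fun g => \sum_(x \in [set: G]) f (g * x^-1)%g * h x.

Definition chi (K : seq G) : G -> CC := fun g => if g \in K then 1 else 0.

Definition two_sided_ideal (c : G -> CC) : set (G -> CC) :=
  [set f | exists (n : nat) (a b : 'I_n -> G -> CC),
      (forall i, fin_supp (a i) /\ fin_supp (b i)) /\
      f = (fun g => \sum_(i < n) conv (conv (a i) c) (b i) g)].

(* C-Pompeiu set: the set gKh is [seq g*k*h | k <- K] (without duplicates) *)
Definition pompeiu (Cl : set (G -> CC)) (K : seq G) : Prop :=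
  forall f, Cl f ->
    (forall g h : G, \sum_(x <- undup [seq (g * k * h)%g | k <- K]) f x = 0) ->
    f = (fun _ => 0).

End GroupRing.

(* Main.v *)
Require Import Defs.
From HB Require Import structures.
From mathcomp Require Import all_boot all_order all_algebra.
From mathcomp Require Import all_classical.
From mathcomp Require Import ring.
Set Implicit Arguments. Unset Strict Implicit. Unset Printing Implicit Defensive.
Import Order.TTheory GRing.Theory Num.Theory.
Local Open Scope classical_set_scope.
Local Open Scope ring_scope.

Lemma sumT_seq (T : choiceType) (F : T -> CC) (r : seq T) : uniq r ->
  (forall x, x \notin r -> F x = 0) -> \sum_(x \in [set: T]) F x = \sum_(x <- r) F x.
Proof.
move=> ur Fr.
rewrite (fsbig_seq _ _ ur) -(fsbig_widen [set` r] setT) //.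
by move=> x [_ /=]; rewrite /preimage /= => /negP xr; apply: Fr.
Qed.

Lemma sum_dirac (T : eqType) (r : seq T) (F : T -> CC) (c : T) : uniq r ->
  \sum_(x <- r) F x * (x == c)%:R = (c \in r)%:R * F c.
Proof.
move=> ur; case: (boolP (c \in r)) => cr.
  rewrite (bigD1_seq c) //= eqxx mulr1 big1 ?addr0 ?mul1r // => x /negbTE ->.
  by rewrite mulr0.
rewrite mul0r big1_seq // => x /andP[_ xr].
have -> : (x == c) = false.
  by apply/eqP => xc; move: cr; rewrite -xc xr.
by rewrite mulr0.
Qed.
Lemma supp_sum (T : eqType) (r1 r2 : seq T) (F : T -> CC) : uniq r1 -> uniq r2 ->
  (forall x, F x != 0 -> (x \in r1) && (x \in r2)) ->
  \sum_(x <- r1) F x = \sum_(x <- r2) F x.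
Proof.
move=> u1 u2 H.
rewrite [LHS](bigID (fun x => x \in r2)) [RHS](bigID (fun x => x \in r1)) /=.
have Z : forall (r r' : seq T), (forall x, F x != 0 -> x \in r') -> \sum_(x <- r | x \notin r') F x = 0.
  move=> r r' H'; apply: big1 => x xr.
  apply/eqP; apply: contraNT xr => /H'.
  by move=> ->.
rewrite (Z r1 r2); last by move=> x /H /andP[].
rewrite (Z r2 r1); last by move=> x /H /andP[].
rewrite !addr0 -[LHS]big_filter -[RHS]big_filter; apply: perm_big; apply: uniq_perm; rewrite ?filter_uniq //.
by move=> x; rewrite !mem_filter andbC.
Qed.

Lemma a_expand (T : eqType) (a : T -> CC) (ra : seq T) t : uniq ra ->
  (forall x, a x != 0 -> x \in ra) -> a t = \sum_(u <- ra) a u * (t == u)%:R.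
Proof.
move=> ur H; under eq_bigr do rewrite eq_sym.
rewrite sum_dirac //; case: (boolP (t \in ra)) => tr; first by rewrite mul1r.
by rewrite mul0r; apply/eqP; apply: contraNT tr => /H.
Qed.

Section LinAlg.
Variable T : eqType.
Variable en : nat -> T.
Hypothesis en_surj : forall x, exists i, en i = x.
Variable W : (T -> CC) -> Prop.
Hypothesis W0 : W (fun _ => 0).
Hypothesis Wlin : forall a b s1 s2, W s1 -> W s2 -> W (fun x => a * s1 x + b * s2 x).
Variable e : T -> CC.
Hypothesis eW : ~ W e.
Hypothesis esupp : exists r : seq T, forall x, e x != 0 -> x \in r.

Definition Tn n := undup (map en (iota 0 n)).

Lemma Tn_uniq n : uniq (Tn n). Proof. exact: undup_uniq. Qed.

Lemma mem_TnS n x : (x \in Tn n.+1) = (x \in Tn n) || (x == en n).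
Proof.
by rewrite !mem_undup -addn1 iotaD map_cat mem_cat /= mem_seq1 add0n.
Qed.

Lemma Tn_mono k m x : (k <= m)%N -> x \in Tn k -> x \in Tn m.
Proof.
move=> km; rewrite !mem_undup => /mapP[i]; rewrite !mem_iota /= add0n => ik ->.
apply: map_f; rewrite mem_iota add0n /=; exact: leq_trans ik km.
Qed.

Lemma en_Tn i : en i \in Tn i.+1.
Proof. by rewrite mem_TnS eqxx orbT. Qed.

Lemma sum_TnS n (F : T -> CC) : en n \notin Tn n ->
  \sum_(x <- Tn n.+1) F x = \sum_(x <- Tn n) F x + F (en n).
Proof.
move=> cn.
have -> : \sum_(x <- Tn n) F x + F (en n) = \sum_(x <- Tn n ++ [:: en n]) F x.
  by rewrite big_cat big_seq1.
apply: perm_big.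
apply: uniq_perm; first exact: Tn_uniq.
  by rewrite cats1 rcons_uniq cn Tn_uniq.
by move=> x; rewrite mem_TnS mem_cat mem_seq1.
Qed.

Definition ww (s : T -> CC) t := fun x => s x + t * e x.

Definition Good n (phi : T -> CC) := forall s t, W s ->
  (forall x, ww s t x != 0 -> x \in Tn n) ->
  \sum_(x <- Tn n) phi x * ww s t x = t.

Lemma good0 : Good 0 (fun _ => 0).
Proof.
move=> s t Ws H; rewrite big_nil.
have w0 : forall x, ww s t x = 0.
  by move=> x; apply/eqP; apply: contraT => /H.
case: (eqVneq t 0) => // tn0; exfalso; apply: eW.
have -> : e = (fun x => (- t^-1) * s x + 0 * s x).
  apply: funext => x; have := w0 x; rewrite /ww => h.
  have -> : s x = - (t * e x) by apply/eqP; rewrite -addr_eq0 h.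
  by field.
exact: Wlin.
Qed.

Lemma step n phi : Good n phi -> exists phi', Good n.+1 phi' /\
  forall x, x \in Tn n -> phi' x = phi x.
Proof.
move=> Gn; set c := en n.
case: (boolP (c \in Tn n)) => cn.
  exists phi; split => // s t Ws H.
  have H' : forall x, ww s t x != 0 -> x \in Tn n.
    by move=> x /H; rewrite mem_TnS; case/orP => // /eqP ->.
  rewrite (supp_sum (Tn_uniq n.+1) (Tn_uniq n)); first exact: Gn.
  move=> x nz; have wx : ww s t x != 0 by apply: contraNneq nz => ->; rewrite mulr0.
  by rewrite H // H'.
case: (pselect (exists s0 t0, W s0 /\ (forall x, ww s0 t0 x != 0 -> x \in Tn n.+1)
     /\ ww s0 t0 c != 0)).
  move=> [s0 [t0 [Ws0 [H0 w0c]]]].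
  set S0 := \sum_(y <- Tn n) phi y * ww s0 t0 y.
  exists (fun x => if x == c then (t0 - S0) / ww s0 t0 c else phi x); split; last first.
    by move=> x xn; case: eqP => // xc; move: cn; rewrite -xc xn.
  move=> s t Ws H; rewrite sum_TnS // eqxx.
  set lam := ww s t c / ww s0 t0 c.
  have E : forall x, x \in Tn n ->
      (if x == c then (t0 - S0) / ww s0 t0 c else phi x) = phi x.
    by move=> x xn; case: eqP => // xc; move: cn; rewrite -xc xn.
  rewrite (eq_big_seq (fun x => phi x * ww s t x)); last first.
    by move=> x xn; rewrite E.
  set s' := fun x => 1 * s x + (- lam) * s0 x.
  set t' := t - lam * t0.
  have ww' : forall x, ww s' t' x = ww s t x - lam * ww s0 t0 x.
    by move=> x; rewrite /ww /s' /t'; ring.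
  have Ws' : W s' by apply: Wlin.
  have H' : forall x, ww s' t' x != 0 -> x \in Tn n.
    move=> x; rewrite ww' => nz.
    have xc : x != c.
      apply: contraNneq nz => ->; rewrite /lam mulfVK ?subrr //.
    have : x \in Tn n.+1.
      case: (eqVneq (ww s t x) 0) => [wx|/H //].
      by apply: H0; apply: contraNneq nz => ->; rewrite wx mulr0 subrr.
    by rewrite mem_TnS (negbTE xc) orbF.
  have G' := Gn s' t' Ws' H'.
  have -> : \sum_(x <- Tn n) phi x * ww s t x =
      \sum_(x <- Tn n) phi x * ww s' t' x + lam * S0.
    rewrite /S0 mulr_sumr -big_split /=; apply: eq_bigr => x _.
    by rewrite ww'; ring.
  rewrite G' /t' /lam; field.
  exact: w0c.
move=> nex; exists phi; split => // s t Ws H.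
have wc : ww s t c = 0.
  apply/eqP; apply: contraT => wc; case: nex; exists s, t; split => //.
rewrite sum_TnS // wc mulr0 addr0; apply: Gn => // x nz.
have := H x nz; rewrite mem_TnS; case/orP => // /eqP xc.
by move: nz; rewrite xc wc eqxx.
Qed.

Definition stepS n (p : {phi | Good n phi}) : {phi | Good n.+1 phi} :=
  let q := cid (step (svalP p)) in exist _ (sval q) (proj1 (svalP q)).

Fixpoint seqP n : {phi | Good n phi} :=
  match n with 0 => exist _ _ good0 | m.+1 => stepS (seqP m) end.

Definition ph n := sval (seqP n).

Lemma ph_good n : Good n (ph n).
Proof. exact: svalP. Qed.

Lemma ph_next n x : x \in Tn n -> ph n.+1 x = ph n x.
Proof. exact: (proj2 (svalP (cid (step (svalP (seqP n)))))). Qed.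

Lemma ph_agree k m x : (k <= m)%N -> x \in Tn k -> ph m x = ph k x.
Proof.
move=> km xk; elim: m km => [|m IH]; first by rewrite leqn0 => /eqP ->.
rewrite leq_eqVlt => /orP[/eqP -> //|]; rewrite ltnS => km.
by rewrite ph_next ?IH //; apply: Tn_mono xk.
Qed.

Definition idx x := sval (cid (en_surj x)).

Lemma idxP x : en (idx x) = x.
Proof. by rewrite /idx; case: cid. Qed.

Definition ff x := ph (idx x).+1 x.

Lemma ff_eq m x : x \in Tn m -> ff x = ph m x.
Proof.
move=> xm; rewrite /ff.
have xi : x \in Tn (idx x).+1 by rewrite -{1}(idxP x) en_Tn.
rewrite -(ph_agree (leq_maxl (idx x).+1 m) xi) (ph_agree (leq_maxr (idx x).+1 m) xm) //.
Qed.

Lemma cover (r : seq T) : exists N, forall x, x \in r -> x \in Tn N.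
Proof.
elim: r => [|y r [N HN]]; first by exists 0%N.
exists (maxn (idx y).+1 N) => x; rewrite in_cons => /orP[/eqP ->|/HN xN].
  by apply: (Tn_mono (leq_maxl _ _)); rewrite -{1}(idxP y) en_Tn.
exact: (Tn_mono (leq_maxr _ _)).
Qed.

Lemma pair_ff s r : W s -> uniq r -> (forall x, s x != 0 -> x \in r) ->
  \sum_(x <- r) ff x * s x = 0.
Proof.
move=> Ws ur Hr; have [N HN] := cover r.
rewrite (supp_sum ur (Tn_uniq N)); last first.
  move=> x nz; have sx : s x != 0 by apply: contraNneq nz => ->; rewrite mulr0.
  by rewrite Hr // HN // Hr.
rewrite (eq_big_seq (fun x => ph N x * ww s 0 x)).
  apply: ph_good => // x; rewrite /ww mul0r addr0 => /Hr; exact: HN.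
by move=> x xN; rewrite (ff_eq xN) /ww mul0r addr0.
Qed.

Lemma ff_nz : ff <> (fun _ => 0).
Proof.
move=> f0; have [r Hr] := esupp; have [N HN] := cover r.
have := @ph_good N (fun _ => 0) 1 W0.
have E : forall x, ww (fun _ => 0) 1 x = e x by move=> x; rewrite /ww add0r mul1r.
rewrite (eq_big_seq (fun x => ff x * e x)); last first.
  by move=> x xN; rewrite E (ff_eq xN).
rewrite f0 big1; last by move=> x _; rewrite mul0r.
move=> H.
have : (0 : CC) = 1 by apply: H => x; rewrite E => /Hr; exact: HN.
by move/eqP; rewrite eq_sym oner_eq0.
Qed.

Lemma linalg : exists f : T -> CC,
  (forall s r, W s -> uniq r -> (forall x, s x != 0 -> x \in r) ->
     \sum_(x <- r) f x * s x = 0) /\ f <> (fun _ => 0).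
Proof. exists ff; split; [exact: pair_ff | exact: ff_nz]. Qed.
End LinAlg.


Lemma fg_enum (G : groupType) : finitely_generated G -> exists en : nat -> G, forall x, exists i, en i = x.
Proof.
case=> S HS.
pose ev := foldr (fun (p : bool * nat) g =>
  ((if p.1 then (nth 1%g S p.2)^-1 else nth 1%g S p.2) * g)%g) 1%g.
exists (fun n => if @pickle_inv (seq (bool * nat)) n is Some w then ev w else 1%g).
move=> x; have [w <-] : exists w, ev w = x.
  elim: (HS x) => [|s g sS _ [w <-]|s g sS _ [w <-]]; first by exists [::].
    by exists ((false, index s S) :: w); rewrite /= nth_index.
  by exists ((true, index s S) :: w); rewrite /= nth_index.
by exists (pickle w); rewrite pickleK_inv.
Qed.

Lemma fin_supp_sub (G : groupType) (a : G -> CC) (r : seq G) :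
  (forall x, a x != 0 -> x \in r) -> fin_supp a.
Proof.
move=> H; apply: (sub_finite_set _ (finite_seq r)) => x /= nz; exact: H.
Qed.

Lemma swap_sum (G : eqType) (I : Type) (s : seq I) (R : seq G) (f : G -> CC) (F : I -> G -> CC) :
  \sum_(x <- R) f x * \sum_(i <- s) F i x = \sum_(i <- s) \sum_(x <- R) f x * F i x.
Proof. under eq_bigr do rewrite mulr_sumr; exact: exchange_big. Qed.
Section Grp.
Variable G : groupType.
Variable K : seq G.
Hypothesis uK : uniq K.

Definition chiS (u v : G) : G -> CC := fun x => \sum_(k <- K) (x == (u * k * v)%g)%:R.

Lemma conv_seq (f h : G -> CC) (r : seq G) g : uniq r ->
  (forall x, h x != 0 -> x \in r) -> conv f h g = \sum_(x <- r) f (g * x^-1)%g * h x.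
Proof.
move=> ur H; rewrite /conv (sumT_seq ur) // => x xr.
have -> : h x = 0 by apply/eqP; apply: contraNT xr => /H.
by rewrite mulr0.
Qed.

Lemma conv_chi (a : G -> CC) z : conv a (chi K) z = \sum_(k <- K) a (z * k^-1)%g.
Proof.
rewrite (@conv_seq _ _ K) //; last by move=> x; rewrite /chi; case: ifP => // _; rewrite eqxx.
by apply: eq_big_seq => k kK; rewrite /chi kK mulr1.
Qed.

Lemma grp_eq (x v k u : G) : ((x * v^-1) * k^-1 == u)%g = (x == u * k * v)%g.
Proof.
apply/eqP/eqP => [<-|->]; first by rewrite !mulgVK.
by rewrite !mulgK.
Qed.

Lemma formulaF (a b : G -> CC) (ra rb : seq G) x : uniq ra -> uniq rb ->
  (forall y, a y != 0 -> y \in ra) -> (forall y, b y != 0 -> y \in rb) ->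
  conv (conv a (chi K)) b x = \sum_(u <- ra) \sum_(v <- rb) a u * b v * chiS u v x.
Proof.
move=> ua ub Ha Hb.
rewrite (conv_seq _ _ ub Hb) [RHS]exchange_big /=; apply: eq_bigr => v _.
rewrite conv_chi mulr_suml /chiS.
under [RHS]eq_bigr do rewrite mulr_sumr.
rewrite [RHS]exchange_big /=; apply: eq_bigr => k _.
rewrite (a_expand (x / v / k)%g ua Ha) mulr_suml; apply: eq_bigr => u _.
by rewrite grp_eq mulrAC.
Qed.

Definition sseq (a : G -> CC) : seq G := finmap.enum_fset (fset_set [set g | a g != 0]).

Lemma sseq_uniq a : uniq (sseq a).
Proof. exact: finmap.fset_uniq. Qed.

Lemma sseqP a : fin_supp a -> forall x, a x != 0 -> x \in sseq a.
Proof. by move=> fa x nz; rewrite /sseq in_fset_set // inE. Qed.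

Definition Lfun (a b : G -> CC) : seq G :=
  [seq (u * kv)%g | u <- sseq a, kv <- [seq (k * v)%g | k <- K, v <- sseq b]].

Lemma memL a b u k v : u \in sseq a -> k \in K -> v \in sseq b -> (u * k * v)%g \in Lfun a b.
Proof.
move=> ua kK vb; rewrite -mulgA; apply: allpairs_f => //; exact: allpairs_f.
Qed.

Lemma pair_chiS (f : G -> CC) (R : seq G) u v : uniq R ->
  (forall k, k \in K -> (u * k * v)%g \in R) ->
  \sum_(x <- R) f x * chiS u v x = \sum_(k <- K) f (u * k * v)%g.
Proof.
move=> uR Hk; rewrite /chiS; under eq_bigr do rewrite mulr_sumr.
rewrite exchange_big; apply: eq_big_seq => k kK.
by rewrite sum_dirac // (Hk k kK) mul1r.
Qed.

Lemma pomp_sum (f : G -> CC) u v :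
  \sum_(k <- K) f (u * k * v)%g = \sum_(x <- undup [seq (u * k * v)%g | k <- K]) f x.
Proof.
rewrite undup_id ?big_map // map_inj_uniq // => k1 k2 /mulIg /mulgI //.
Qed.

Lemma chiS_supp u v x : chiS u v x != 0 -> x \in [seq (u * k * v)%g | k <- K].
Proof.
move=> nz; case: (boolP (x \in _)) => // xn; exfalso; move: nz.
rewrite /chiS big1_seq ?eqxx // => k /andP[_ kK]; case: eqP => // xe.
by move: xn; rewrite xe (map_f (fun k => (u * k * v)%g) kK).
Qed.

Lemma dirA : two_sided_ideal (chi K) = @CG G -> pompeiu (@calF G) K.
Proof.
move=> HI f _ Hf; apply: funext => y.
have Hd0 : CG (fun x : G => (x == y)%:R : CC).
  apply: (@fin_supp_sub _ _ [:: y]) => x; rewrite mem_seq1.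
  by case: (x == y); rewrite //= eqxx.
have : two_sided_ideal (chi K) (fun x : G => (x == y)%:R : CC) by rewrite HI.
move=> -[n [A [B [HAB Hd]]]].
have Hdx : forall x, (x == y)%:R = \sum_(i < n) conv (conv (A i) (chi K)) (B i) x.
  by move=> x; have := congr1 (fun F => F x) Hd.
set R := undup (y :: flatten [seq Lfun (A i) (B i) | i <- enum 'I_n]).
have uR : uniq R by exact: undup_uniq.
have -> : f y = \sum_(x <- R) f x * (x == y)%:R.
  by rewrite sum_dirac // mem_undup in_cons eqxx mul1r.
under eq_bigr do rewrite Hdx.
rewrite swap_sum; apply: big1 => i _.
have [HA HB] := HAB i.
under eq_bigr do rewrite (formulaF _ (sseq_uniq (A i)) (sseq_uniq (B i)) (sseqP HA) (sseqP HB)).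
rewrite swap_sum; apply: big1_seq => u /andP[_ uA].
rewrite swap_sum; apply: big1_seq => v /andP[_ vB].
under eq_bigr do rewrite mulrCA.
rewrite -mulr_sumr pair_chiS //; last first.
  move=> k kK; rewrite mem_undup in_cons; apply/orP; right.
  apply/flattenP; exists (Lfun (A i) (B i)); first by apply: map_f; rewrite mem_enum.
  exact: memL.
by rewrite pomp_sum Hf mulr0.
Qed.

Lemma dirB1 : two_sided_ideal (chi K) `<=` @CG G.
Proof.
move=> f [n [A [B [HAB ->]]]].
set R := flatten [seq Lfun (A i) (B i) | i <- enum 'I_n].
apply: (@fin_supp_sub _ _ R) => x nz; apply: contraNT nz => xn.
apply/eqP; apply: big1 => i _.
have [HA HB] := HAB i.
rewrite (formulaF _ (sseq_uniq (A i)) (sseq_uniq (B i)) (sseqP HA) (sseqP HB)).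
apply: big1_seq => u /andP[_ uA]; apply: big1_seq => v /andP[_ vB].
rewrite /chiS big1_seq ?mulr0 // => k /andP[_ kK].
case: eqP => // xe; exfalso; move/negP: xn; apply.
apply/flattenP; exists (Lfun (A i) (B i)); first by apply: map_f; rewrite mem_enum.
by rewrite xe; apply: memL.
Qed.

Definition Wsp (s : G -> CC) := exists l : seq (CC * G * G),
  s = fun x => \sum_(p <- l) p.1.1 * chiS p.1.2 p.2 x.

Lemma Wsp_ideal s : Wsp s -> two_sided_ideal (chi K) s.
Proof.
move=> [l ->].
pose p0 : CC * G * G := (0, 1%g, 1%g).
exists (size l), (fun i => fun u => (nth p0 l i).1.1 * (u == (nth p0 l i).1.2)%:R),
  (fun i => fun v => (v == (nth p0 l i).2)%:R : CC); split.
  move=> i; split.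
    apply: (@fin_supp_sub _ _ [:: (nth p0 l i).1.2]) => x; rewrite mem_seq1.
    by case: (x == _); rewrite //= mulr0 eqxx.
  apply: (@fin_supp_sub _ _ [:: (nth p0 l i).2]) => x; rewrite mem_seq1.
  by case: (x == _); rewrite //= eqxx.
apply: funext => x.
rewrite (big_nth p0) big_mkord; apply: eq_bigr => i _.
rewrite (formulaF _ (ra:=[:: (nth p0 l i).1.2]) (rb:=[:: (nth p0 l i).2])) //; last first.
- by move=> z; rewrite mem_seq1; case: (z == _); rewrite //= eqxx.
- by move=> z; rewrite mem_seq1; case: (z == _); rewrite //= mulr0 eqxx.
by rewrite !big_seq1 !eqxx mulr1 mulr1.
Qed.

Lemma dirB2 : finitely_generated G -> pompeiu (@calF G) K -> @CG G `<=` two_sided_ideal (chi K).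
Proof.
move=> fg HP e ee; apply: contrapT => nI.
have [en Hen] := fg_enum fg.
have W0 : Wsp (fun _ => 0) by exists [::]; apply: funext => x; rewrite big_nil.
have Wlin : forall a b s1 s2, Wsp s1 -> Wsp s2 -> Wsp (fun x => a * s1 x + b * s2 x).
  move=> a b s1 s2 [l1 ->] [l2 ->].
  exists ([seq (a * p.1.1, p.1.2, p.2) | p <- l1] ++ [seq (b * p.1.1, p.1.2, p.2) | p <- l2]).
  apply: funext => x /=; rewrite big_cat !big_map /= !mulr_sumr.
  by congr (_ + _); apply: eq_bigr => p _; rewrite mulrA.
have nW : ~ Wsp e by move=> /Wsp_ideal.
have es : exists r : seq G, forall x, e x != 0 -> x \in r by exists (sseq e); exact: (sseqP ee).
have [f [Hf1 Hf2]] := linalg Hen W0 Wlin nW es.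
apply: Hf2; apply: HP => // g h.
have Wc : Wsp (chiS g h) by exists [:: (1, g, h)]; apply: funext => x; rewrite big_seq1 mul1r.
have Hs : forall x, chiS g h x != 0 -> x \in undup [seq (g * k * h)%g | k <- K].
  by move=> x /chiS_supp; rewrite mem_undup.
have H0 := Hf1 _ _ Wc (undup_uniq _) Hs.
have Hk : forall k, k \in K -> (g * k * h)%g \in undup [seq (g * k * h)%g | k <- K].
  by move=> k kK; rewrite mem_undup (map_f (fun k => (g * k * h)%g) kK).
by rewrite (pair_chiS _ (undup_uniq _) Hk) pomp_sum in H0.
Qed.
End Grp.

Theorem theorem1 (G : groupType) (K : seq G) :
  finitely_generated G -> uniq K ->
  (pompeiu (@calF G) K <-> two_sided_ideal (chi K) = @CG G).
Proof.
move=> fg uK; split.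
  move=> HP; apply/seteqP; split; [exact: (dirB1 uK) | exact: (dirB2 uK fg HP)].
exact: (dirA uK).
Qed.
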